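(* There exist a finite-dimensional real vector space $Y$, ordered by a closed cone $Y_+$ with non-empty interior, and a linear operator $B: Y \to Y$ such that the dual semigroup $(e^{tB'})_{t\ge0}$ is individually eventually nonnegative with respect to the dual cone $Y'_+$, but $(e^{tB})_{t\ge0}$ is not individually eventually nonnegative with respect to $Y_+$. (Equivalently, the dual of an individually eventually nonnegative matrix semigroup need not be individually eventually nonnegative.)
   Context: For a finite-dimensional real vector space $X$ ordered by a closed cone $X_+$ with non-empty interior and $A: X\to X$ linear, $(e^{tA})_{t\ge0}$ is individually eventually nonnegative if for each $x\in X_+$ there is $t_0\ge0$ with $e^{tA}x\in X_+$ for all $t\ge t_0$. The dual cone is $X'_+ := \{x' \in X' : \langle x', x\rangle\ge0\ \forall x\in X_+\}$ and $A'$ is the dual operator on $X'$. *)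

(* Defs.v *)
From HB Require Import structures.
From mathcomp Require Import all_boot all_order all_algebra.
From mathcomp Require Import all_classical all_reals all_analysis.
Set Implicit Arguments. Unset Strict Implicit. Unset Printing Implicit Defensive.
Import Order.TTheory GRing.Theory Num.Theory.
Import numFieldNormedType.Exports.
Local Open Scope classical_set_scope.
Local Open Scope ring_scope.

(* The finite-dimensional real vector space Y of dimension n is modelled as
   column vectors 'cV[R]_n; its dual Y' as row vectors 'rV[R]_n with the
   pairing <x', x> = (x' *m x) 0 0.  A linear operator B : Y -> Y is a matrix
   'M[R]_n acting by x |-> B *m x; its dual B' acts by x' |-> x' *m B. *)

Definition expmx (R : realType) (n : nat) (A : 'M[R]_n) : 'M[R]_n :=
  limn (fun N : nat => \sum_(k < N) (k`!%:R)^-1 *: A ^+ k).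

Definition is_cone (R : realType) (n : nat) (C : set 'cV[R]_n) : Prop :=
  [/\ C 0,
      (forall x y, C x -> C y -> C (x + y)),
      (forall (a : R) x, 0 <= a -> C x -> C (a *: x)) &
      (forall x, C x -> C (- x) -> x = 0)].

Definition is_closed_solid_cone (R : realType) (n : nat) (C : set 'cV[R]_n) : Prop :=
  [/\ is_cone C, closed C & (interior C) !=set0].

Definition dual_cone (R : realType) (n : nat) (C : set 'cV[R]_n) : set 'rV[R]_n :=
  [set x' | forall x, C x -> 0 <= (x' *m x) 0 0].

Definition indiv_ev_nonneg (R : realType) (n : nat) (C : set 'cV[R]_n) (A : 'M[R]_n) : Prop :=
  forall x, C x -> exists t0 : R, 0 <= t0 /\
    forall t : R, t0 <= t -> C (expmx (t *: A) *m x).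

(* dual semigroup (e^{tA'})_{t>=0} on Y' individually eventually nonnegative
   w.r.t. the dual cone; e^{tA'} x' = x' *m e^{tA} *)
Definition dual_indiv_ev_nonneg (R : realType) (n : nat) (C : set 'cV[R]_n) (A : 'M[R]_n) : Prop :=
  forall x', dual_cone C x' -> exists t0 : R, 0 <= t0 /\
    forall t : R, t0 <= t -> dual_cone C (x' *m expmx (t *: A)).

(* Main.v *)
Require Import Defs.
From HB Require Import structures.
From mathcomp Require Import all_boot all_order all_algebra.
From mathcomp Require Import all_classical all_reals all_analysis.
Import Order.TTheory GRing.Theory Num.Theory.
Import numFieldNormedType.Exports.
Local Open Scope classical_set_scope.
Local Open Scope ring_scope.

Lemma expmx_nil (R : realType) (A : 'M[R]_3) : A ^+ 3 = 0 ->
  expmx A = 1 + A + 2^-1 *: A ^+ 2.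
Proof.
move=> A3; rewrite /expmx; apply: norm_lim_near_cst.
exists 3%N => // N /= HN.
rewrite -(subnKC HN) big_split_ord /= big_ord_recr big_ord_recr big_ord_recr big_ord0 /=.
rewrite big1 ?addr0; last first.
  by move=> i _; rewrite exprD A3 mul0r scaler0.
rewrite add0r expr0 expr1; congr (_ + _ + _) => //=; by rewrite invr1 scale1r.
Qed.
From mathcomp Require Import ring lra.

Definition Bf (R : realType) (i j : nat) : R :=
  match i, j with 0, 1 => 2 | 1, 0 => -3 | 1, 2 => 3 | 2, 1 => 2 | _, _ => 0 end.
Definition Bm (R : realType) : 'M[R]_3 := \matrix_(i, j) Bf R i j.
Definition Ef (R : realType) (t : R) (i j : nat) : R :=
  match i, j with
  | 0, 0 => 1 - 3 * t ^+ 2 | 0, 1 => 2 * t | 0, 2 => 3 * t ^+ 2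
  | 1, 0 => - 3 * t | 1, 1 => 1 | 1, 2 => 3 * t
  | 2, 0 => - 3 * t ^+ 2 | 2, 1 => 2 * t | 2, 2 => 1 + 3 * t ^+ 2
  | _, _ => 0 end.

Lemma B3 (R : realType) : (Bm R) ^+ 3 = 0.
Proof.
apply/matrixP => i j; rewrite !exprS expr0 mulr1 -!mulmxE.
rewrite !mxE !big_ord_recl !big_ord0 !mxE !big_ord_recl !big_ord0 !mxE /=.
case: i => [[|[|[|?]]] ?]; case: j => [[|[|[|?]]] ?] //=; ring.
Qed.

Lemma Eent (R : realType) (t : R) : expmx (t *: Bm R) = \matrix_(i, j) Ef R t i j.
Proof.
rewrite expmx_nil; last by rewrite exprZn B3 scaler0.
apply/matrixP => i j; rewrite exprZn (expr2 (Bm R)) -mulmxE.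
rewrite !mxE !big_ord_recl !big_ord0 !mxE /=.
case: i => [[|[|[|?]]] ?]; case: j => [[|[|[|?]]] ?] //=.
all: by field.
Qed.

Section S.
Variable R : realType.
Definition i0 : 'I_3 := ord0.
Definition i1 : 'I_3 := @lift 3 ord0 ord0.
Definition i2 : 'I_3 := @lift 3 ord0 (@lift 2 ord0 ord0).

Lemma mulv3 k (A : 'M[R]_(k, 3)) (x : 'cV[R]_3) i :
  (A *m x) i 0 = A i i0 * x i0 0 + A i i1 * x i1 0 + A i i2 * x i2 0.
Proof. by rewrite mxE !big_ord_recl big_ord0 addr0 !addrA. Qed.

Lemma rmul3 k (y : 'rV[R]_3) (A : 'M[R]_(3, k)) j :
  (y *m A) 0 j = y 0 i0 * A i0 j + y 0 i1 * A i1 j + y 0 i2 * A i2 j.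
Proof. by rewrite mxE !big_ord_recl big_ord0 addr0 !addrA. Qed.

Definition v3 (a b c : R) : 'cV[R]_3 :=
  \col_(i < 3) (match val i with 0 => a | 1 => b | _ => c end)%N.

Definition Cc : set 'cV[R]_3 :=
  [set x | x i0 0 * x i0 0 + x i1 0 * x i1 0 <= x i2 0 * x i2 0 /\ 0 <= x i2 0].

Lemma cs (a b c d e f : R) : a*a+b*b <= c*c -> 0<=c -> d*d+e*e <= f*f -> 0 <= f ->
  a*d+b*e <= c*f.
Proof.
move=> h1 h2 h3 h4.
have h5 : (a*d+b*e)^+2 <= (c*f)^+2.
  have -> : (a*d+b*e)^+2 = (a*a+b*b)*(d*d+e*e) - (a*e-b*d)^+2 by ring.
  have h6 : (a*a+b*b)*(d*d+e*e) <= (c*c)*(f*f).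
    apply: ler_pM => //; [nra|nra].
  have -> : (c*f)^+2 = (c*c)*(f*f) by ring.
  have : 0 <= (a*e-b*d)^+2 by apply: sqr_ge0.
  lra.
have h7 : 0 <= c*f by apply: mulr_ge0.
nra.
Qed.

Lemma e1 (x : 'cV[R]_3) (a : R) i : (a *: x) i 0 = a * x i 0.
Proof. by rewrite mxE. Qed.


Lemma mxeq3 (x : 'cV[R]_3) : x i0 0 = 0 -> x i1 0 = 0 -> x i2 0 = 0 -> x = 0.
Proof.
move=> h0 h1 h2; apply/matrixP => i j; rewrite (ord1 j) mxE.
case: i => [[|[|[|?]]] Hi] //.
- by rewrite -h0; congr (x _ _); apply: val_inj.
- by rewrite -h1; congr (x _ _); apply: val_inj.
- by rewrite -h2; congr (x _ _); apply: val_inj.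
Qed.

Lemma Cc_cone : is_cone Cc.
Proof.
split.
- by rewrite /Cc /= !mxE; lra.
- move=> x y [hx1 hx2] [hy1 hy2]; rewrite /Cc /= !mxE.
  have := @cs _ _ _ _ _ _ hx1 hx2 hy1 hy2; split; nra.
- move=> a x ha [hx1 hx2]; rewrite /Cc /= !mxE; split; last by apply: mulr_ge0.
  have := sqr_ge0 a; nra.
- move=> x [hx1 hx2]; rewrite /Cc /= !mxE => -[hy1 hy2].
  have h2 : x i2 0 = 0 by lra.
  apply: mxeq3 => //; nra.
Qed.

Lemma Cc_closed : closed Cc.
Proof.
pose c0 := fun x : 'cV[R]_3 => x i0 0.
pose c1 := fun x : 'cV[R]_3 => x i1 0.
pose c2 := fun x : 'cV[R]_3 => x i2 0.
have cc0 : continuous c0 by exact: coord_continuous.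
have cc1 : continuous c1 by exact: coord_continuous.
have cc2 : continuous c2 by exact: coord_continuous.
pose g1 := (c2 \* c2) - ((c0 \* c0) + (c1 \* c1)).
have cg : continuous g1.
  move=> x; apply: continuousB; [apply: continuousM|apply: continuousD; apply: continuousM].
  1-6: first [exact: cc0 | exact: cc1 | exact: cc2].
have -> : Cc = g1 @^-1` [set r | 0 <= r] `&` c2 @^-1` [set r | 0 <= r].
  have g1E : forall x, g1 x = x i2 0 * x i2 0 - (x i0 0 * x i0 0 + x i1 0 * x i1 0) by [].
  apply/seteqP; split => x /=; rewrite /Cc g1E /c2 /=; [move=> [h1 h2]|move=> [h1 h2]]; split => //; lra.
apply: closedI.
- exact: (proj1 (continuous_closedP g1) cg _ (@closed_ge _ 0)).
- exact: (proj1 (continuous_closedP c2) cc2 _ (@closed_ge _ 0)).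
Qed.

Lemma Cc_int : interior Cc !=set0.
Proof.
exists (v3 0 0 1); rewrite /interior /=.
have hc := fun i => @coord_continuous R 3 1 i 0 (v3 0 0 1).
have h4 : 0 < 4^-1 :> R by rewrite invr_gt0.
have n0 := @cvgr_dist_lt _ _ _ _ _ _ _ (hc i0) _ h4.
have n1 := @cvgr_dist_lt _ _ _ _ _ _ _ (hc i1) _ h4.
have n2 := @cvgr_dist_lt _ _ _ _ _ _ _ (hc i2) _ h4.
near=> y.
have a0 : `|v3 0 0 1 i0 0 - y i0 0| < 4^-1 by near: y; exact: n0.
have a1 : `|v3 0 0 1 i1 0 - y i1 0| < 4^-1 by near: y; exact: n1.
have a2 : `|v3 0 0 1 i2 0 - y i2 0| < 4^-1 by near: y; exact: n2.
move: a0 a1 a2; rewrite !mxE /= !ltr_norml /Cc /=.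
move=> /andP[b0 c0] /andP[b1 c1] /andP[b2 c2].
split; nra.
Unshelve. all: end_near.
Qed.

Lemma v3_in (a b c : R) : a * a + b * b <= c * c -> 0 <= c -> Cc (v3 a b c).
Proof. by rewrite /Cc /= !mxE /=. Qed.

Lemma dual_char (y : 'rV[R]_3) : dual_cone Cc y ->
  y 0 i0 * y 0 i0 + y 0 i1 * y 0 i1 <= y 0 i2 * y 0 i2 /\ 0 <= y 0 i2.
Proof.
move=> h.
have t1 := h (v3 0 0 1) (@v3_in 0 0 1 ltac:(lra) ltac:(lra)).
rewrite rmul3 !mxE /= in t1.
have hp : 0 <= y 0 i0 * y 0 i0 + y 0 i1 * y 0 i1 by nra.
set r := Num.sqrt (y 0 i0 * y 0 i0 + y 0 i1 * y 0 i1).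
have hr : r * r = y 0 i0 * y 0 i0 + y 0 i1 * y 0 i1 by rewrite -expr2 sqr_sqrtr.
have r0 : 0 <= r by apply: sqrtr_ge0.
have t2 := h (v3 (- y 0 i0) (- y 0 i1) r) (@v3_in (- y 0 i0) (- y 0 i1) r ltac:(nra) r0).
rewrite rmul3 !mxE /= in t2.
split; last by lra.
rewrite -hr.
case: (lerP r (y 0 i2)) => hc; first by nra.
nra.
Qed.

Lemma dual_of (y : 'rV[R]_3) :
  y 0 i0 * y 0 i0 + y 0 i1 * y 0 i1 <= y 0 i2 * y 0 i2 -> 0 <= y 0 i2 ->
  dual_cone Cc y.
Proof.
move=> h1 h2 x [hx1 hx2]; rewrite rmul3.
have h1' : (- y 0 i0) * (- y 0 i0) + (- y 0 i1) * (- y 0 i1) <= y 0 i2 * y 0 i2 by nra.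
have := @cs _ _ _ _ _ _ h1' h2 hx1 hx2.
lra.
Qed.

Lemma dual_ev (p0 p1 p2 : R) : p0 * p0 + p1 * p1 <= p2 * p2 -> 0 <= p2 ->
  exists t0 : R, 0 <= t0 /\ forall t : R, t0 <= t ->
  (p0 * (1 - 3 * t ^+ 2) + p1 * (- 3 * t) + p2 * (- 3 * t ^+ 2)) *
  (p0 * (1 - 3 * t ^+ 2) + p1 * (- 3 * t) + p2 * (- 3 * t ^+ 2)) +
  (p0 * (2 * t) + p1 * 1 + p2 * (2 * t)) * (p0 * (2 * t) + p1 * 1 + p2 * (2 * t))
  <= (p0 * (3 * t ^+ 2) + p1 * (3 * t) + p2 * (1 + 3 * t ^+ 2)) *
     (p0 * (3 * t ^+ 2) + p1 * (3 * t) + p2 * (1 + 3 * t ^+ 2)) /\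
  0 <= p0 * (3 * t ^+ 2) + p1 * (3 * t) + p2 * (1 + 3 * t ^+ 2).
Proof.
move=> h1 h2.
have s0 : 0 <= p0 + p2 by nra.
have d0 : 0 <= p2 - p0 by nra.
set s := p0 + p2 in s0 *.
have key : forall t : R,
  (p0 * (3 * t ^+ 2) + p1 * (3 * t) + p2 * (1 + 3 * t ^+ 2)) *
  (p0 * (3 * t ^+ 2) + p1 * (3 * t) + p2 * (1 + 3 * t ^+ 2)) -
  ((p0 * (1 - 3 * t ^+ 2) + p1 * (- 3 * t) + p2 * (- 3 * t ^+ 2)) *
  (p0 * (1 - 3 * t ^+ 2) + p1 * (- 3 * t) + p2 * (- 3 * t ^+ 2)) +
  (p0 * (2 * t) + p1 * 1 + p2 * (2 * t)) * (p0 * (2 * t) + p1 * 1 + p2 * (2 * t)))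
  = 2 * (t * s) * (t * s) + 2 * (t * s) * p1 + s * (p2 - p0) - p1 * p1.
  by move=> t; rewrite /s; ring.
have cE : forall t : R, p0 * (3 * t ^+ 2) + p1 * (3 * t) + p2 * (1 + 3 * t ^+ 2)
  = p2 + 3 * t * (p1 + t * s) by move=> t; rewrite /s; ring.
case: (eqVneq s 0) => hs.
  have hp0 : p0 = - p2 by move: hs; rewrite /s => /eqP; rewrite addr_eq0 => /eqP.
  have hp1 : p1 * p1 <= 0 by rewrite hp0 in h1; nra.
  have p10 : p1 = 0 by nra.
  exists 0; split => // t _.
  have := key t; rewrite cE hs p10; split; [nra | lra].
have sp : 0 < s by rewrite lt_def hs.
exists (2 * `|p1| / s); split; first by apply: divr_ge0 => //; apply: mulr_ge0 => //.
move=> t ht.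
have hu : 2 * `|p1| <= t * s by rewrite -ler_pdivrMr.
have hu1 : 2 * p1 <= t * s by have := ler_norm p1; lra.
have hu2 : - (2 * p1) <= t * s by have := ler_norm (- p1); rewrite normrN; lra.
have t0 : 0 <= t.
  apply: le_trans ht; apply: divr_ge0 => //; apply: mulr_ge0 => //.
have := key t; rewrite cE => hk; set u := t * s in hu hu1 hu2 hk *.
have hsd : 0 <= s * (p2 - p0) by apply: mulr_ge0.
split; first by nra.
have : 0 <= p1 + u by lra.
nra.
Qed.
End S.

Theorem mainTheorem7 (R : realType) :
  exists (n : nat) (C : set 'cV[R]_n) (B : 'M[R]_n),
    is_closed_solid_cone C /\
    dual_indiv_ev_nonneg C B /\ ~ indiv_ev_nonneg C B.
Proof.
exists 3%N, (Cc R), (Bm R).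
split; first by split; [exact: Cc_cone | exact: Cc_closed | exact: Cc_int].
split.
- move=> y hy; have [h1 h2] := @dual_char R y hy.
  have [t0 [ht0 H]] := @dual_ev R _ _ _ h1 h2.
  exists t0; split => // t ht.
  have [k1 k2] := H t ht.
  apply: (@dual_of R); rewrite !rmul3 Eent !mxE /=; [exact: k1 | exact: k2].
- move=> H.
  have [t0 [ht0 Ht]] := H _ (@v3_in R (-1) 0 1 ltac:(lra) ltac:(lra)).
  have := Ht (t0 + 1) ltac:(lra).
  rewrite /Cc /= !mulv3 Eent !mxE /=.
  have hT : 0 < t0 + 1 by lra.
  set T := t0 + 1 in hT *; move=> [hc _].
  nra.
Qed.
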